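(* Let $r\ge0$ be an integer and let $B(x,y)$ be a $q$-quasi-polynomial in $x$ and $y$ of degree $d$, i.e. a linear combination of terms $[x;q]_m[y;q]_n\rho_1^x\rho_2^y$ with $m+n\le d$ and $\rho_1,\rho_2$ roots of unity. Then $D(r,B)(x,y)$ is a $q$-quasi-polynomial of degree at most $2r+d$ in $x$ and $y$ (i.e. a linear combination of such terms with $m+n\le 2r+d$).
   Context: $q$ is an indeterminate; $[x;q]=(1-q^x)/(1-q)$, $[x;q]_m=\prod_{i=0}^{m-1}[x+i;q]$; coefficients of the linear combinations may be rational functions of $q$. Sums use the convention: $\sum_{i=a}^bf(i)=f(a)+\cdots+f(b)$ if $a\le b$, $0$ if $b=a-1$, and $-f(b+1)-\cdots-f(a-1)$ if $b+1\le a-1$. $D(0,B)=B$ and $D(r,B)(x,y)=\sum_{x'=x+1}^{y+1}\sum_{y'=x}^{y}D(r-1,B)(x',y')\,q^{x'+y'}$. *)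

(* Defs.v *)
From HB Require Import structures.
From mathcomp Require Import all_boot all_order all_algebra.
From mathcomp Require Import algC.
Set Implicit Arguments. Unset Strict Implicit. Unset Printing Implicit Defensive.
Import Order.TTheory GRing.Theory Num.Theory.
Local Open Scope ring_scope.

(* Field of rational functions in the indeterminate q over the algebraic
   complex numbers algC (which contain all roots of unity). *)
Definition Fq : fieldType := {fraction {poly algC}}.

Definition qv : Fq := tofrac ('X : {poly algC}).

Definition cst (a : algC) : Fq := tofrac (a%:P).

Definition qbr (x : int) : Fq := (1 - qv ^ x) / (1 - qv).

Definition qpoch (x : int) (m : nat) : Fq := \prod_(i < m) qbr (x + i%:Z).

(* Signed sum convention: sum_{i=a}^b f i = f a + ... + f b if a <= b,
   0 if b = a-1, and -(f (b+1) + ... + f (a-1)) if b+1 <= a-1. *)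
Definition isum (a b : int) (f : int -> Fq) : Fq :=
  if (a <= b)%R then \sum_(k < absz (b - a + 1)%R) f (a + k%:Z)
  else - \sum_(k < absz (a - 1 - b)%R) f (b + 1 + k%:Z).

Fixpoint Dop (r : nat) (B : int -> int -> Fq) : int -> int -> Fq :=
  match r with
  | 0%N => B
  | r'.+1 => fun x y =>
      isum (x + 1) (y + 1) (fun x' =>
        isum x y (fun y' => Dop r' B x' y' * qv ^ (x' + y')))
  end.

Definition root_of_unity (a : algC) : Prop := exists k : nat, (0 < k)%N /\ a ^+ k = 1.

Definition qterm (t : Fq * nat * nat * algC * algC) (x y : int) : Fq :=
  let '(c, m, n, r1, r2) := t in
  c * qpoch x m * qpoch y n * cst r1 ^ x * cst r2 ^ y.

Definition is_qqp (d : nat) (f : int -> int -> Fq) : Prop :=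
  exists s : seq (Fq * nat * nat * algC * algC),
    (forall t, t \in s ->
       let '(c, m, n, r1, r2) := t in
       (m + n <= d)%N /\ root_of_unity r1 /\ root_of_unity r2) /\
    (forall x y, f x y = \sum_(t <- s) qterm t x y).

(* Main.v *)
Require Import Defs.
From mathcomp Require Import all_boot all_order all_algebra.
From mathcomp Require Import algC.
From mathcomp Require Import zify ring.
Set Implicit Arguments. Unset Strict Implicit. Unset Printing Implicit Defensive.
Import Order.TTheory GRing.Theory Num.Theory.
Local Open Scope ring_scope.

Lemma qv_neq0 : qv != 0.
Proof. by rewrite /qv tofrac_eq0 polyX_eq0. Qed.

Lemma one_qv_neq0 : 1 - qv != 0.
Proof.
rewrite subr_eq0 /qv eq_sym -[1 : Fq](rmorph1 (@tofrac _)) tofrac_eq.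
apply/eqP => /(congr1 (fun p : {poly algC} => size p)); rewrite size_polyX size_poly1 //.
Qed.

Lemma exprz_natE (x : Fq) (n : nat) : x ^ (n%:Z) = x ^+ n.
Proof. by []. Qed.

Definition base (a : nat) (r : algC) : Fq := qv ^+ a * cst r.
Arguments base : simpl never.

Lemma rou_neq0 r : Defs.root_of_unity r -> r != 0.
Proof. move=> [k [k0 e]]; apply/eqP => r0; move: e; rewrite r0 expr0n; case: k k0 => //. move=> k _ /eqP; rewrite eq_sym oner_eq0 //. Qed.

Lemma rou_mul r s : Defs.root_of_unity r -> Defs.root_of_unity s -> Defs.root_of_unity (r * s).
Proof.
move=> [k [k0 e]] [l [l0 f]]; exists (k * l)%N; split; first by rewrite muln_gt0 k0.
by rewrite exprMn exprM e expr1n mulnC exprM f expr1n mulr1.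
Qed.

Lemma rou1 : Defs.root_of_unity 1.
Proof. by exists 1%N; rewrite expr1n. Qed.

Lemma base_tofrac a r : base a r = tofrac ('X^a * r%:P).
Proof. by rewrite /base /qv /cst rmorphM rmorphXn. Qed.

Lemma base_neq0 a r : r != 0 -> base a r != 0.
Proof.
move=> r0; rewrite base_tofrac tofrac_eq0 mulf_eq0 negb_or polyC_eq0 r0 andbT.
by rewrite expf_neq0 // polyX_eq0.
Qed.

Lemma base_neq1 a r : (0 < a)%N -> r != 0 -> base a r != 1.
Proof.
move=> a0 r0; rewrite base_tofrac -[1 : Fq](rmorph1 (@tofrac _)) tofrac_eq.
apply/eqP => /(congr1 (fun p : {poly algC} => size p)); rewrite mulrC mul_polyC size_scale // size_polyXn size_poly1.
by case: a a0.
Qed.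

Lemma base_mul a b r s : base a r * base b s = base (a + b) (r * s).
Proof. by rewrite /base /cst !rmorphM /= exprD; ring. Qed.

Lemma unitE (x : Fq) : x != 0 -> x \is a GRing.unit.
Proof. by rewrite unitfE. Qed.

Notation rou := Defs.root_of_unity.
Definition mterm (t : Fq * nat * nat * algC * algC) (x y : int) : Fq :=
  let '(c, a, b, r1, r2) := t in c * base a r1 ^ x * base b r2 ^ y.

Definition M (d : nat) (f : int -> int -> Fq) : Prop :=
  exists s : seq (Fq * nat * nat * algC * algC),
    (forall t, t \in s ->
       let '(c, a, b, r1, r2) := t in
       (a + b <= d)%N /\ rou r1 /\ rou r2) /\
    (forall x y, f x y = \sum_(t <- s) mterm t x y).

Lemma M_ext d f g : (forall x y, f x y = g x y) -> M d g -> M d f.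
Proof. by move=> e [s [H1 H2]]; exists s; split=> // x y; rewrite e H2. Qed.

Lemma M_mono d e f : (d <= e)%N -> M d f -> M e f.
Proof.
move=> de [s [H1 H2]]; exists s; split=> // [[[[[c a] b] r1] r2]] /H1 [h1 h2].
by split=> //; apply: leq_trans de.
Qed.

Lemma M0 d : M d (fun _ _ => 0).
Proof. by exists [::]; split=> // x y; rewrite big_nil. Qed.

Lemma M_add d f g : M d f -> M d g -> M d (fun x y => f x y + g x y).
Proof.
move=> [s [H1 H2]] [s' [H1' H2']]; exists (s ++ s'); split.
  by move=> t; rewrite mem_cat => /orP [/H1|/H1'].
by move=> x y; rewrite big_cat H2 H2'.
Qed.

Lemma M_scale d c f : M d f -> M d (fun x y => c * f x y).
Proof.
move=> [s [H1 H2]]; exists [seq (c * t.1.1.1.1, t.1.1.1.2, t.1.1.2, t.1.2, t.2) | t <- s]; split.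
  move=> t /mapP [[[[[c' a] b] r1] r2] /H1 h ->] //.
move=> x y; rewrite H2 big_map mulr_sumr; apply: eq_bigr => [[[[[c' a] b] r1] r2]] _ /=.
by rewrite !mulrA.
Qed.

Lemma M_sum d (T : eqType) (s : seq T) (F : T -> int -> int -> Fq) :
  (forall t, t \in s -> M d (F t)) -> M d (fun x y => \sum_(t <- s) F t x y).
Proof.
elim: s => [|t s IH] H.
  by apply: (M_ext _ (M0 d)) => x y; rewrite big_nil.
apply: (M_ext (g := fun x y => F t x y + \sum_(t <- s) F t x y)).
  by move=> x y; rewrite big_cons.
apply: M_add; first by apply: H; rewrite mem_head.
by apply: IH => u us; apply: H; rewrite in_cons us orbT.
Qed.

Lemma M_term t : let '(c, a, b, r1, r2) := t in rou r1 -> rou r2 -> M (a + b) (mterm t).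
Proof.
case: t => [[[[c a] b] r1] r2] h1 h2; exists [:: (c, a, b, r1, r2)]; split.
  by move=> t; rewrite inE => /eqP ->.
by move=> x y; rewrite big_seq1.
Qed.

Lemma base_unit a r : rou r -> base a r \is a GRing.unit.
Proof. by move=> h; apply: unitE; apply: base_neq0; apply: rou_neq0. Qed.

Lemma base_exprM a b r s (x : int) : rou r -> rou s ->
  base (a + b) (r * s) ^ x = base a r ^ x * base b s ^ x.
Proof. by move=> h1 h2; rewrite -base_mul exprzMl // base_unit. Qed.

Lemma mterm_mul c a b r1 r2 c' a' b' r1' r2' x y :
  rou r1 -> rou r2 -> rou r1' -> rou r2' ->
  mterm (c, a, b, r1, r2) x y * mterm (c', a', b', r1', r2') x y =
  mterm (c * c', a + a', b + b', r1 * r1', r2 * r2') x y.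
Proof.
move=> h1 h2 h1' h2'; rewrite /= !base_exprM //; ring.
Qed.

Lemma M_mul d e f g : M d f -> M e g -> M (d + e) (fun x y => f x y * g x y).
Proof.
move=> [s [H1 H2]] [s' [H1' H2']].
apply: (M_ext (g := fun x y => \sum_(t <- s) \sum_(t' <- s') mterm t x y * mterm t' x y)).
  by move=> x y; rewrite H2 H2' big_distrlr.
apply: M_sum => [[[[[c a] b] r1] r2]] /H1 [le [h1 h2]].
apply: M_sum => [[[[[c' a'] b'] r1'] r2']] /H1' [le' [h1' h2']].
apply: (M_ext (g := mterm (c * c', a + a', b + b', r1 * r1', r2 * r2'))).
  by move=> x y; rewrite mterm_mul.
apply: M_mono (M_term (c * c', a + a', b + b', r1 * r1', r2 * r2') _ _); try exact: rou_mul.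
lia.
Qed.

Lemma M_swap d f : M d f -> M d (fun x y => f y x).
Proof.
move=> [s [H1 H2]]; exists [seq (t.1.1.1.1, t.1.1.2, t.1.1.1.2, t.2, t.1.2) | t <- s]; split.
  move=> t /mapP [[[[[c' a] b] r1] r2] /H1 [h1 [h2 h3]] ->] /=; split=> //; lia.
move=> x y; rewrite H2 big_map; apply: eq_bigr => [[[[[c' a] b] r1] r2]] _ /=.
by rewrite mulrAC.
Qed.

Lemma M_const c : M 0 (fun _ _ => c).
Proof.
apply: (M_ext (g := mterm (c, 0%N, 0%N, 1, 1))); last exact: (M_term (c,0%N,0%N,1,1) rou1 rou1).
by move=> x y; rewrite /= /base /cst rmorph1 !mulr1 expr0 !exp1rz !mulr1.
Qed.

Lemma M_bx a r : rou r -> M a (fun x y => base a r ^ x).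
Proof.
move=> h; apply: (M_ext (g := mterm (1, a, 0%N, r, 1))); last first.
  by apply: M_mono (M_term (1,a,0%N,r,1) h rou1); lia.
by move=> x y; rewrite /= [base 0 1]/base /cst rmorph1 !mulr1 expr0 exp1rz mulr1 mul1r.
Qed.

Lemma M_by a r : rou r -> M a (fun x y => base a r ^ y).
Proof. by move=> h; apply: (M_ext _ (M_swap (M_bx a h))) => x y. Qed.

Lemma base11 : base 1 1 = qv.
Proof. by rewrite /base /cst rmorph1 mulr1 expr1. Qed.

Lemma qbr_shift (x : int) (m : nat) :
  qbr (x + m%:Z) = (1 - qv) ^-1 * 1 + (- (qv ^+ m / (1 - qv))) * base 1 1 ^ x.
Proof.
rewrite base11 /qbr (expfzDr _ _ qv_neq0) exprz_natE.

move: (qv ^ x) (qv ^+ m) (1 - qv) => A B C.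
ring.
Qed.

Lemma M_qpoch_x m : M m (fun x y => qpoch x m).
Proof.
elim: m => [|m IH].
  by apply: (M_ext _ (M_const 1)) => x y; rewrite /qpoch big_ord0.
have H1 : M 1 (fun x y => qbr (x + m%:Z)).
  apply: (M_ext (g := fun x y => (1 - qv) ^-1 * 1 + (- (qv ^+ m / (1 - qv))) * base 1 1 ^ x)).
    by move=> x y; rewrite qbr_shift.
  apply: M_add; apply: M_scale; last exact: M_bx rou1.
  exact: M_mono (M_const 1).
apply: (M_ext _ (M_mono _ (M_mul IH H1))); last by rewrite addn1.
by move=> x y; rewrite /qpoch big_ord_recr.
Qed.

Lemma M_qpoch_y m : M m (fun x y => qpoch y m).
Proof. by apply: (M_ext _ (M_swap (M_qpoch_x m))). Qed.

Lemma M_cst_x r : rou r -> M 0 (fun x y => cst r ^ x).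
Proof.
move=> h; apply: (M_ext _ (M_bx 0 h)) => x y.
by rewrite /base expr0 mul1r.
Qed.

Lemma M_cst_y r : rou r -> M 0 (fun x y => cst r ^ y).
Proof. by move=> h; apply: (M_ext _ (M_swap (M_cst_x h))). Qed.

Lemma M_qterm t : (let '(c, m, n, r1, r2) := t in
       rou r1 /\ rou r2 -> M (m + n) (qterm t)).
Proof.
case: t => [[[[c m] n] r1] r2] [h1 h2].
apply: (M_ext (g := fun x y => c * qpoch x m * qpoch y n * cst r1 ^ x * cst r2 ^ y)) => //.
apply: (M_mono (d := 0 + m + n + 0 + 0)); first by rewrite !addn0.
apply: M_mul; last exact: M_cst_y.
apply: M_mul; last exact: M_cst_x.
apply: M_mul; last exact: M_qpoch_y.
apply: M_mul; last exact: M_qpoch_x.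
exact: M_const.
Qed.

Lemma qqp_M d f : is_qqp d f -> M d f.
Proof.
move=> [s [H1 H2]].
apply: (M_ext (g := fun x y => \sum_(t <- s) qterm t x y)) => //.
apply: M_sum => [[[[[c m] n] r1] r2]] /H1 [le [h1 h2]].
exact: M_mono le (M_qterm (c, m, n, r1, r2) (conj h1 h2)).
Qed.

Definition P (a : nat) (g : int -> Fq) : Prop :=
  exists s : seq (Fq * nat), (forall t, t \in s -> (t.2 <= a)%N) /\
    (forall x, g x = \sum_(t <- s) t.1 * qpoch x t.2).

Lemma P_ext a f g : (forall x, f x = g x) -> P a g -> P a f.
Proof. by move=> e [s [H1 H2]]; exists s; split=> // x; rewrite e H2. Qed.

Lemma P_mono a b f : (a <= b)%N -> P a f -> P b f.
Proof. by move=> ab [s [H1 H2]]; exists s; split=> // t /H1 h; apply: leq_trans ab. Qed.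

Lemma P_add a f g : P a f -> P a g -> P a (fun x => f x + g x).
Proof.
move=> [s [H1 H2]] [s' [H1' H2']]; exists (s ++ s'); split.
  by move=> t; rewrite mem_cat => /orP [/H1|/H1'].
by move=> x; rewrite big_cat H2 H2'.
Qed.

Lemma P_scale a c f : P a f -> P a (fun x => c * f x).
Proof.
move=> [s [H1 H2]]; exists [seq (c * t.1, t.2) | t <- s]; split.
  by move=> t /mapP [[c' m] /H1 h ->].
move=> x; rewrite H2 big_map mulr_sumr; apply: eq_bigr => [[c' m]] _ /=.
by rewrite mulrA.
Qed.

Lemma P_sum a (T : eqType) (s : seq T) (F : T -> int -> Fq) :
  (forall t, t \in s -> P a (F t)) -> P a (fun x => \sum_(t <- s) F t x).
Proof.
elim: s => [|t s IH] H.
  by exists [::]; split=> // x; rewrite !big_nil.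
apply: (P_ext (g := fun x => F t x + \sum_(t <- s) F t x)).
  by move=> x; rewrite big_cons.
apply: P_add; first by apply: H; rewrite mem_head.
by apply: IH => u us; apply: H; rewrite in_cons us orbT.
Qed.

Lemma P_qpoch m : P m (fun x => qpoch x m).
Proof.
exists [:: (1, m)]; split=> [t|x]; first by rewrite inE => /eqP ->.
by rewrite big_seq1 mul1r.
Qed.

Lemma qpochS (x : int) (m : nat) : qpoch x m.+1 = qpoch x m * qbr (x + m%:Z).
Proof. by rewrite /qpoch big_ord_recr. Qed.

Lemma qv_qpoch (x : int) (m : nat) :
  qv ^ x * qpoch x m = (qv ^+ m)^-1 * qpoch x m + (- ((1 - qv) * (qv ^+ m)^-1)) * qpoch x m.+1.
Proof.
rewrite qpochS /qbr (expfzDr _ _ qv_neq0) exprz_natE.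
have h1 := one_qv_neq0; have h2 : qv ^+ m != 0 := expf_neq0 _ qv_neq0.
move: (qv ^ x) (qv ^+ m) (1 - qv) (qpoch x m) h1 h2 => A B C Q h1 h2.
have e : C / B * (Q * ((1 - A * B) / C)) = B^-1 * Q - B^-1 * Q * (A * B).
  rewrite [LHS](_ : _ = (C / C) * (B^-1 * Q * (1 - A * B))); last by ring.
  by rewrite (mulfV h1) mul1r mulrBr mulr1.
rewrite mulNr e opprB addrC subrK.
have hB : B^-1 * B = 1 := mulVf h2.
move: (B^-1) hB => Bi hB.
by rewrite -[A * Q]mul1r -hB; ring.
Qed.

Lemma P_pow a : P a (fun x => (qv ^+ a) ^ x).
Proof.
elim: a => [|a [s [H1 H2]]].
  by apply: (P_ext _ (P_qpoch 0)) => x; rewrite expr0 exp1rz /qpoch big_ord0.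
apply: (P_ext (g := fun x => \sum_(t <- s) t.1 * (qv ^ x * qpoch x t.2))).
  move=> x; rewrite exprS expfzMl H2 mulr_sumr; apply: eq_bigr => t _.
  by rewrite mulrCA.
apply: P_sum => [[c m]] /H1 /= le; apply: P_scale.
have A1 : P a.+1 (fun x => qpoch x m) := P_mono (leqW le) (P_qpoch m).
have A2 : P a.+1 (fun x => qpoch x m.+1) := @P_mono m.+1 a.+1 _ le (P_qpoch m.+1).
apply: (P_ext _ (P_add (P_scale _ A1) (P_scale _ A2))).
by move=> x; rewrite qv_qpoch.
Qed.

Lemma Q_ext d f g : (forall x y, f x y = g x y) -> is_qqp d g -> is_qqp d f.
Proof. by move=> e [s [H1 H2]]; exists s; split=> // x y; rewrite e H2. Qed.

Lemma Q_mono d e f : (d <= e)%N -> is_qqp d f -> is_qqp e f.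
Proof.
move=> de [s [H1 H2]]; exists s; split=> // [[[[[c a] b] r1] r2]] /H1 [h1 h2].
by split=> //; apply: leq_trans de.
Qed.

Lemma Q_add d f g : is_qqp d f -> is_qqp d g -> is_qqp d (fun x y => f x y + g x y).
Proof.
move=> [s [H1 H2]] [s' [H1' H2']]; exists (s ++ s'); split.
  by move=> t; rewrite mem_cat => /orP [/H1|/H1'].
by move=> x y; rewrite big_cat H2 H2'.
Qed.

Lemma Q_sum d (T : eqType) (s : seq T) (F : T -> int -> int -> Fq) :
  (forall t, t \in s -> is_qqp d (F t)) -> is_qqp d (fun x y => \sum_(t <- s) F t x y).
Proof.
elim: s => [|t s IH] H.
  by exists [::]; split=> // x y; rewrite !big_nil.
apply: (Q_ext (g := fun x y => F t x y + \sum_(t <- s) F t x y)).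
  by move=> x y; rewrite big_cons.
apply: Q_add; first by apply: H; rewrite mem_head.
by apply: IH => u us; apply: H; rewrite in_cons us orbT.
Qed.

Lemma Q_mterm c a b r1 r2 : rou r1 -> rou r2 -> is_qqp (a + b) (mterm (c, a, b, r1, r2)).
Proof.
move=> h1 h2.
have [s1 [H1 E1]] := P_pow a; have [s2 [H2 E2]] := P_pow b.
apply: (Q_ext (g := fun x y => \sum_(u <- s1) \sum_(v <- s2)
   qterm (c * u.1 * v.1, u.2, v.2, r1, r2) x y)).
  move=> x y; rewrite /mterm /base !expfzMl E1 E2.
  transitivity (c * cst r1 ^ x * cst r2 ^ y * ((\sum_(u <- s1) u.1 * qpoch x u.2) *
     (\sum_(v <- s2) v.1 * qpoch y v.2))); first by ring.
  rewrite big_distrlr mulr_sumr; apply: eq_bigr => u _; rewrite mulr_sumr.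
  by apply: eq_bigr => v _; rewrite /qterm /=; ring.
apply: Q_sum => u /H1 hu; apply: Q_sum => v /H2 hv.
exists [:: (c * u.1 * v.1, u.2, v.2, r1, r2)]; split.
  by move=> t; rewrite inE => /eqP -> /=; split=> //; apply: leq_add.
by move=> x y; rewrite big_seq1.
Qed.

Lemma M_qqp d f : M d f -> is_qqp d f.
Proof.
move=> [s [H1 H2]].
apply: (Q_ext (g := fun x y => \sum_(t <- s) mterm t x y)) => //.
apply: Q_sum => [[[[[c a] b] r1] r2]] /H1 [le [h1 h2]].
exact: Q_mono le (@Q_mterm c a b r1 r2 h1 h2).
Qed.

Lemma eq_isum a b f g : (forall k, f k = g k) -> isum a b f = isum a b g.
Proof.
move=> e; rewrite /isum; case: ifP => _.
  by apply: eq_bigr => k _; rewrite e.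
by congr (- _); apply: eq_bigr => k _; rewrite e.
Qed.

Lemma isum_sum a b (T : Type) (s : seq T) (F : T -> int -> Fq) :
  isum a b (fun k => \sum_(t <- s) F t k) = \sum_(t <- s) isum a b (F t).
Proof.
rewrite /isum; case: ifP => _; first by rewrite exchange_big.
by rewrite exchange_big sumrN.
Qed.

Lemma isum_scale a b c f : isum a b (fun k => c * f k) = c * isum a b f.
Proof.
rewrite /isum; case: ifP => _; first by rewrite mulr_sumr.
by rewrite mulrN mulr_sumr.
Qed.

Lemma isum_tele a b (F : int -> Fq) :
  isum a b (fun k => F (k + 1) - F k) = F (b + 1) - F a.
Proof.
rewrite /isum; case: ifP => h.
  set n := absz (b - a + 1)%R.
  rewrite (eq_bigr (fun k : 'I_n => (fun j : nat => F (a + j%:Z)) (k : nat).+1 - (fun j : nat => F (a + j%:Z)) k)); last first.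
    by move=> k _ /=; congr (F _ - _); lia.
  rewrite -(big_mkord xpredT (fun k => (fun j : nat => F (a + j%:Z)) k.+1 - (fun j : nat => F (a + j%:Z)) k)).
  rewrite telescope_sumr // /=.
  have hn : (n%:Z = b - a + 1)%R by rewrite /n; lia.
  by congr (F _ - F _); lia.
set n := absz (a - 1 - b)%R.
rewrite (eq_bigr (fun k : 'I_n => (fun j : nat => F (b + 1 + j%:Z)) (k : nat).+1 - (fun j : nat => F (b + 1 + j%:Z)) k)); last first.
  by move=> k _ /=; congr (F _ - _); lia.
rewrite -(big_mkord xpredT (fun k => (fun j : nat => F (b + 1 + j%:Z)) k.+1 - (fun j : nat => F (b + 1 + j%:Z)) k)).
rewrite telescope_sumr // /= opprB.
have hn : (n%:Z = a - 1 - b)%R by rewrite /n; lia.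
by congr (F _ - F _); lia.
Qed.

Definition geo (w : Fq) (a b : int) : Fq := (w ^ (b + 1) - w ^ a) / (w - 1).

Lemma isum_geo a b w : w != 0 -> w != 1 -> isum a b (fun k => w ^ k) = geo w a b.
Proof.
move=> w0 w1.
have h : w - 1 != 0 by rewrite subr_eq0.
rewrite (eq_isum _ _ (g := fun k => (fun j => w ^ j / (w - 1)) (k + 1) - (fun j => w ^ j / (w - 1)) k)).
  by rewrite isum_tele /geo mulrBl.
move=> k /=; rewrite (expfzDr _ _ w0) expr1z -mulrBl.
have e : w ^ k * w - w ^ k = w ^ k * (w - 1) by rewrite mulrBr mulr1.
by rewrite e -mulrA (mulfV h) mulr1.
Qed.

Lemma M_geo n r (i j : int) : (0 < n)%N -> rou r ->
  M n (fun x y => geo (base n r) (x + i) (y + j)).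
Proof.
move=> n0 h; set w := base n r.
have w0 : w != 0 by apply: base_neq0; apply: rou_neq0.
apply: (M_ext (g := fun x y => (w ^ (j + 1) / (w - 1)) * w ^ y + (- (w ^ i / (w - 1))) * w ^ x)).
  move=> x y; rewrite /geo -addrA (expfzDr y (j + 1) w0) (expfzDr x i w0).
  move: (w ^ x) (w ^ y) (w ^ i) (w ^ (j + 1)) ((w - 1)^-1) => A B C D E.
  by ring.
by apply: M_add; apply: M_scale; [apply: M_by | apply: M_bx].
Qed.

Lemma base_shift a r (k : int) : base a r ^ k * qv ^ k = base a.+1 r ^ k.
Proof.
rewrite -expfzMl; congr (_ ^ _); rewrite /base exprSr.
by move: (qv ^+ a) qv (cst r) => A B C; ring.
Qed.

Lemma M_step_term c a b r1 r2 : rou r1 -> rou r2 ->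
  M (a + b + 2) (fun x y => isum (x + 1) (y + 1) (fun x' =>
     isum x y (fun y' => mterm (c, a, b, r1, r2) x' y' * qv ^ (x' + y')))).
Proof.
move=> h1 h2.
have U0 : base a.+1 r1 != 0 by apply: base_neq0; apply: rou_neq0.
have W0 : base b.+1 r2 != 0 by apply: base_neq0; apply: rou_neq0.
have U1 : base a.+1 r1 != 1 by apply: base_neq1 => //; apply: rou_neq0.
have W1 : base b.+1 r2 != 1 by apply: base_neq1 => //; apply: rou_neq0.
apply: (M_ext (g := fun x y => c * geo (base b.+1 r2) (x + 0) (y + 0) * geo (base a.+1 r1) (x + 1) (y + 1))).
  move=> x y.
  rewrite (eq_isum _ _ (g := fun x' => (c * geo (base b.+1 r2) x y) * base a.+1 r1 ^ x')).
    by rewrite isum_scale (isum_geo _ _ U0 U1) !addr0.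
  move=> x'.
  rewrite (eq_isum _ _ (g := fun y' => (c * base a.+1 r1 ^ x') * base b.+1 r2 ^ y')).
    by rewrite isum_scale (isum_geo _ _ W0 W1) mulrAC.
  move=> y'; rewrite /mterm (expfzDr _ _ qv_neq0) -(base_shift a r1 x') -(base_shift b r2 y').
  by move: (base a r1 ^ x') (base b r2 ^ y') (qv ^ x') (qv ^ y') => A B C D; ring.
have G1 := @M_geo b.+1 r2 0 0 (ltn0Sn _) h2.
have G2 := @M_geo a.+1 r1 1 1 (ltn0Sn _) h1.
have le : (b.+1 + a.+1 <= a + b + 2)%N by lia.
apply: (M_ext _ (M_mono le (M_scale c (M_mul G1 G2)))).
by move=> x y; rewrite mulrA.
Qed.

Lemma M_step d f : M d f -> M (d + 2) (fun x y => isum (x + 1) (y + 1) (fun x' =>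
     isum x y (fun y' => f x' y' * qv ^ (x' + y')))).
Proof.
move=> [s [H1 H2]].
apply: (M_ext (g := fun x y => \sum_(t <- s) isum (x + 1) (y + 1) (fun x' =>
     isum x y (fun y' => mterm t x' y' * qv ^ (x' + y'))))).
  move=> x y; rewrite -isum_sum; apply: eq_isum => x'.
  rewrite -isum_sum; apply: eq_isum => y'.
  by rewrite H2 mulr_suml.
apply: M_sum => [[[[[c a] b] r1] r2]] /H1 [le [h1 h2]].
have le' : (a + b + 2 <= d + 2)%N by lia.
exact: M_mono le' (@M_step_term c a b r1 r2 h1 h2).
Qed.

Lemma M_Dop r d B : M d B -> M (2 * r + d) (Dop r B).
Proof.
move=> HB; elim: r => [|r IH]; first exact: HB.
have le : ((2 * r + d) + 2 <= 2 * r.+1 + d)%N by lia.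
apply: (M_mono le); apply: (M_ext _ (M_step IH)) => x y.
reflexivity.
Qed.

Theorem lemma14 (r d : nat) (B : int -> int -> Fq) :
  is_qqp d B -> is_qqp (2 * r + d) (Dop r B).
Proof.
by move=> h; apply: M_qqp; apply: M_Dop; apply: qqp_M.
Qed.
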